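(* Let $A\in\mathbb{R}^{n\times n}$ be symmetric (not necessarily PSD), let $L>0$, and assume every nonzero eigenvalue of $A$ has magnitude at least $L$. Let $S\in\mathbb{R}^{k\times n}$ satisfy Assumption L for $A$ with parameter $L$. Then for every $i$ with $\lambda_i(A)>0$, the matrix $SAS^T$ has at least $i$ eigenvalues and $\lambda_i(SAS^T)\ge\lambda_i(A)-51L$.
   Context: $\lambda_i(M)$ denotes the $i$-th largest eigenvalue of a symmetric matrix $M$. $S$ is an $\alpha$-distortion subspace embedding for $X$ (or its column span) if $(1-\alpha)\|Xv\|^2\le\|SXv\|^2\le(1+\alpha)\|Xv\|^2$ for all $v$. Assumption L (for symmetric $A$ and $L>0$): for every $\lambda\ge L$, $S$ is a $\min(L/\lambda,1/10)$-distortion subspace embedding for the span of all eigenvectors of $A$ whose eigenvalue has magnitude at least $\lambda$. *)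

(* Defs.v *)
From mathcomp Require Import all_boot all_order all_algebra.
From mathcomp Require Import reals.
Set Implicit Arguments. Unset Strict Implicit. Unset Printing Implicit Defensive.
Import Order.TTheory GRing.Theory Num.Theory.
Local Open Scope ring_scope.

Section Defs.
Variable R : realType.

Definition sqnorm (m : nat) (x : 'cV[R]_m) : R := \sum_(i < m) x i 0 ^+ 2.

(* s is the list of eigenvalues of the square matrix M, counted with
   multiplicity and sorted in nonincreasing order; lambda_i(M) = s`_(i-1). *)
Definition eigenvalue_list (m : nat) (M : 'M[R]_m) (s : seq R) : Prop :=
  sorted >=%R s /\ char_poly M = \prod_(a <- s) ('X - a%:P).

Definition in_eigspan_ge (n : nat) (A : 'M[R]_n) (lam : R) (x : 'cV[R]_n) : Prop :=
  exists (vs : seq (R * 'cV[R]_n)),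
    (forall p, p \in vs -> A *m p.2 = p.1 *: p.2 /\ lam <= `|p.1|) /\
    x = \sum_(p <- vs) p.2.

Definition subspace_embedding (k n : nat) (S : 'M[R]_(k, n)) (alpha : R)
    (U : 'cV[R]_n -> Prop) : Prop :=
  forall x, U x ->
    (1 - alpha) * sqnorm x <= sqnorm (S *m x) /\
    sqnorm (S *m x) <= (1 + alpha) * sqnorm x.

Definition assumption_L (k n : nat) (S : 'M[R]_(k, n)) (A : 'M[R]_n) (L : R) : Prop :=
  forall lam : R, L <= lam ->
    subspace_embedding S (Num.min (L / lam) (1 / 10)) (in_eigspan_ge A lam).

End Defs.

(* Main.v *)
Require Import Defs.
From mathcomp Require Import all_boot all_order all_algebra.
From mathcomp Require Import reals complex spectral.
From mathcomp Require Import ring lra zify.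
Import Order.TTheory GRing.Theory Num.Theory.
Local Open Scope ring_scope.
Set Implicit Arguments. Unset Strict Implicit. Unset Printing Implicit Defensive.

Section Cplx.
Variable R : realType.
Local Notation C := (R[i]).
Local Notation toC := (real_complex R).
Local Notation Re := (@complex.Re R).
Local Notation Im := (@complex.Im R).

Lemma ReD (x y : C) : Re (x + y) = Re x + Re y. Proof. by case: x; case: y. Qed.
Lemma ImD (x y : C) : Im (x + y) = Im x + Im y. Proof. by case: x; case: y. Qed.
Lemma Re0 : Re (0 : C) = 0. Proof. by []. Qed.
Lemma Im0 : Im (0 : C) = 0. Proof. by []. Qed.
Lemma ReMr (x : C) (r : R) : Re (x * toC r) = Re x * r.
Proof. by case: x => a b /=; rewrite mulr0 subr0. Qed.
Lemma ImMr (x : C) (r : R) : Im (x * toC r) = Im x * r.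
Proof. by case: x => a b /=; rewrite mulr0 add0r. Qed.
Lemma ReM (x y : C) : Re (x * y) = Re x * Re y - Im x * Im y.
Proof. by case: x; case: y. Qed.
Lemma ImM (x y : C) : Im (x * y) = Re x * Im y + Im x * Re y.
Proof. by case: x => a b; case: y => c d /=; rewrite addrC. Qed.

Lemma Re_sum (I : Type) (r : seq I) (P : pred I) (F : I -> C) :
  Re (\sum_(i <- r | P i) F i) = \sum_(i <- r | P i) Re (F i).
Proof. exact: (big_morph _ ReD Re0). Qed.
Lemma Im_sum (I : Type) (r : seq I) (P : pred I) (F : I -> C) :
  Im (\sum_(i <- r | P i) F i) = \sum_(i <- r | P i) Im (F i).
Proof. exact: (big_morph _ ImD Im0). Qed.

Lemma dot_ge0 n (u : 'rV[R]_n) : 0 <= (u *m u^T) 0 0.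
Proof. rewrite mxE; apply: sumr_ge0 => j _; rewrite mxE; exact: mulr_ge0_le0 || exact: sqr_ge0 || (rewrite -expr2; exact: sqr_ge0). Qed.

Lemma dot_eq0 n (u : 'rV[R]_n) : (u *m u^T) 0 0 = 0 -> u = 0.
Proof.
rewrite mxE => /eqP; rewrite psumr_eq0 => [/allP H|j _]; last first.
  by rewrite mxE -expr2 sqr_ge0.
apply/rowP => j; rewrite mxE; have := H j (mem_index_enum j).
by rewrite mxE -expr2 sqrf_eq0 => /eqP.
Qed.

Lemma e00B m n (X Y : 'M[R]_(m,n)) i j : (X - Y) i j = X i j - Y i j.
Proof. by rewrite !mxE. Qed.
Lemma e00D m n (X Y : 'M[R]_(m,n)) i j : (X + Y) i j = X i j + Y i j.
Proof. by rewrite !mxE. Qed.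
Lemma e00Z m n (a : R) (X : 'M[R]_(m,n)) i j : (a *: X) i j = a * X i j.
Proof. by rewrite !mxE. Qed.

Lemma sym_cplx_eig n (A : 'M[R]_n) (w : 'rV[C]_n) (z : C) :
  A^T = A -> w != 0 -> w *m map_mx toC A = z *: w -> Im z = 0.
Proof.
move=> sA wN0 Hw.
pose u := map_mx Re w; pose v := map_mx Im w.
have Hu : u *m A = Re z *: u - Im z *: v.
  apply/rowP => j; have /rowP/(_ j) := Hw; rewrite !mxE => /(congr1 Re).
  rewrite Re_sum ReM => <-; apply: eq_bigr => k _; rewrite !mxE ReMr.
  by [].
have Hv : v *m A = Re z *: v + Im z *: u.
  apply/rowP => j; have /rowP/(_ j) := Hw; rewrite !mxE => /(congr1 Im).
  rewrite Im_sum ImM => <-; apply: eq_bigr => k _; rewrite !mxE ImMr.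
  by [].
have sym : (u *m A *m v^T) 0 0 = (v *m A *m u^T) 0 0.
  have e : (u *m A *m v^T)^T 0 0 = (u *m A *m v^T) 0 0 by rewrite mxE.
  by rewrite -e !trmx_mul trmxK sA mulmxA.
have tuv : (u *m v^T) 0 0 = (v *m u^T) 0 0.
  have e : (v *m u^T)^T 0 0 = (v *m u^T) 0 0 by rewrite mxE.
  by rewrite -e trmx_mul trmxK.
have L1 : (u *m A *m v^T) 0 0 = Re z * (u *m v^T) 0 0 - Im z * (v *m v^T) 0 0.
  by rewrite Hu mulmxBl -!scalemxAl e00B !e00Z.
have L2 : (v *m A *m u^T) 0 0 = Re z * (v *m u^T) 0 0 + Im z * (u *m u^T) 0 0.
  by rewrite Hv mulmxDl -!scalemxAl e00D !e00Z.
have H0 : Im z * ((u *m u^T) 0 0 + (v *m v^T) 0 0) = 0.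
  move: sym; rewrite L1 L2 tuv => sym.
  by apply/eqP; rewrite -subr_eq0 subr0; apply/eqP; rewrite mulrDr; lra.
apply/eqP; apply: contraNT wN0 => bN0.
move: H0 => /eqP; rewrite mulf_eq0 (negbTE bN0) /= paddr_eq0 ?dot_ge0 //.
case/andP => /eqP/dot_eq0 u0 /eqP/dot_eq0 v0.
apply/eqP/rowP => j; have := congr1 (fun M : 'rV[R]_n => M 0 j) u0; have := congr1 (fun M : 'rV[R]_n => M 0 j) v0.
rewrite !mxE; case: (w 0 j) => a b /= -> ->; by [].
Qed.

Lemma sym_eigvec n (A : 'M[R]_n) (U : 'M[R]_n) : A^T = A -> stablemx U A -> U != 0 ->
  exists2 v : 'rV_n, v != 0 & ((v <= U)%MS /\ exists a, v *m A = a *: v).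
Proof.
move=> sA stU UN0.
have p_gt0 : (0 < \rank U)%N by rewrite lt0n mxrank_eq0.
set M := restrict U A; set rb := row_base U.
have HM : rb *m A = M *m rb.
  by rewrite /M /restrict mulmxKpV // stable_row_base.
have [z /eigenvalueP [w Hw wN0]] := eigenvalue_closed (map_mx toC M) p_gt0.
pose wc := w *m map_mx toC rb.
have Hwc : wc *m map_mx toC A = z *: wc.
  by rewrite /wc -mulmxA -map_mxM HM map_mxM mulmxA Hw scalemxAl.
have wcN0 : wc != 0.
  rewrite /wc mul_mx_rowfree_eq0 // /row_free mxrank_map; exact: row_base_free.
have Imz := sym_cplx_eig sA wcN0 Hwc.
have zE : z = toC (Re z) by move: Imz; clear; case: z => a b /= ->.
have : eigenvalue M (Re z).
  rewrite eigenvalue_root_char -(fmorph_root toC) map_char_poly -eigenvalue_root_char.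
  apply/eigenvalueP; exists w => //; rewrite Hw; congr (_ *: _); exact: zE.
case/eigenvalueP => v0 Hv0 v0N0.
exists (v0 *m rb).
  by rewrite mul_mx_rowfree_eq0 // row_base_free.
split; first by rewrite -(eq_row_base U) submxMl.
by exists (Re z); rewrite -mulmxA HM mulmxA Hv0 scalemxAl.
Qed.
End Cplx.

Section RST.
Variable R : realType.

Lemma rst_partial n (A : 'M[R]_n) : A^T = A -> forall r, (r <= n)%N ->
  exists V : 'M[R]_(r,n), exists e : 'rV[R]_r,
    V *m V^T = 1%:M /\ V *m A = diag_mx e *m V.
Proof.
move=> sA; elim=> [_|r IH rn].
  by exists 0, 0; split; apply/matrixP => -[].
have [V [e [VV VA]]] := IH (ltnW rn).
have rkV : \rank V = r.
  apply/eqP; rewrite eqn_leq rank_leq_row /=.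
  by rewrite -{1}(mxrank1 R r) -VV mxrankM_maxl.
set U := kermx V^T.
have UN0 : U != 0.
  by rewrite -mxrank_eq0 mxrank_ker mxrank_tr rkV subn_eq0 -ltnNge.
have AV : A *m V^T = V^T *m diag_mx e.
  by rewrite -{1}sA -trmx_mul VA trmx_mul tr_diag_mx.
have stU : stablemx U A.
  by apply/sub_kermxP; rewrite -mulmxA AV mulmxA mulmx_ker mul0mx.
have [v vN0 [/sub_kermxP vV [a va]]] := sym_eigvec sA stU UN0.
set s := (v *m v^T) 0 0.
have s_gt0 : 0 < s.
  rewrite lt_def dot_ge0 andbT; apply/eqP => /dot_eq0 v0; by rewrite v0 eqxx in vN0.
pose v' := (Num.sqrt s)^-1 *: v.
have v'v' : v' *m v'^T = 1%:M.
  rewrite (mx11_scalar (v' *m v'^T)); congr (_%:M).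
  rewrite /v' linearZ /= -scalemxAl -scalemxAr !e00Z -/s.
  rewrite -[X in _ * (_ * X)](@sqr_sqrtr _ s) ?ltW // mulrA -expr2 -exprMn.
  by rewrite mulVf ?expr1n // sqrtr_eq0 -ltNge.
have v'V : v' *m V^T = 0 by rewrite /v' -scalemxAl vV scaler0.
rewrite -add1n; exists (col_mx v' V), (row_mx (a%:M : 'rV_1) e); split.
  rewrite (tr_col_mx v' V) mul_col_row v'v' v'V VV (scalar_mx_block 1 r).
  by rewrite -[V]trmxK -trmx_mul v'V trmx0.
rewrite mul_col_mx diag_mx_row mul_block_col !mul0mx addr0 add0r VA.
congr col_mx.
rewrite /v' -scalemxAl va scalerA mulrC -scalerA.
have -> : diag_mx (a%:M : 'rV_1) = a%:M.
  by apply/matrixP => i j; rewrite !ord1 !mxE eqxx !mulr1n.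
by rewrite mul_scalar_mx.
Qed.

Lemma rst n (A : 'M[R]_n) : A^T = A ->
  exists Q : 'M[R]_n, exists d : 'rV[R]_n,
    Q *m Q^T = 1%:M /\ Q^T *m Q = 1%:M /\ Q *m A = diag_mx d *m Q.
Proof.
move=> sA; have [Q [d [QQ QA]]] := rst_partial sA (leqnn n).
by exists Q, d; split=> //; split=> //; exact: mulmx1C.
Qed.
End RST.

Section Lists.
Variable R : realType.

Lemma ge_trans_rel : transitive (T:=R) >=%R.
Proof. by move=> y x z /= yx zy; exact: le_trans zy yx. Qed.

Lemma count_prefix (s : seq R) i : sorted >=%R s -> (0 < i)%N -> (i <= size s)%N ->
  (i <= count (fun x => (s`_i.-1 <= x)%R) s)%N.
Proof.
move=> ss i0 isz.
set P := (fun x => (s`_i.-1 <= x)%R).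
rewrite -[in X in (_ <= X)%N](cat_take_drop i s) count_cat.
have -> : count P (take i s) = i.
  have : all P (take i s).
    apply/(all_nthP 0) => p; rewrite size_take_min (minn_idPl isz) => pi.
  rewrite nth_take //.
  have := sorted_leq_nth ge_trans_rel (fun x => lexx x) 0 ss.
  move=> /(_ p i.-1); rewrite !inE; apply.
  - exact: leq_trans pi isz.
  - by rewrite (leq_trans _ isz) // prednK.
  - by rewrite -ltnS prednK.
  by rewrite all_count size_take_min (minn_idPl isz) => /eqP.
exact: leq_addr.
Qed.

Lemma nth_from_count (s : seq R) i c : sorted >=%R s -> (0 < i)%N ->
  (i <= count (fun x => (c <= x)%R) s)%N -> (i <= size s)%N /\ c <= s`_i.-1.
Proof.
move=> ss i0 ic.
have isz : (i <= size s)%N := leq_trans ic (count_size _ _).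
split=> //; rewrite leNgt; apply/negP => lt.
have : (count (fun x => (c <= x)%R) s <= i.-1)%N.
  rewrite -(cat_take_drop i.-1 s) count_cat.
  have -> : count (fun x => (c <= x)%R) (drop i.-1 s) = 0%N.
    apply/eqP; rewrite -leqn0 leqNgt -has_count; apply/hasPn => x /(nthP 0) [p].
    rewrite size_drop => pl <-; rewrite nth_drop -ltNge.
    apply: le_lt_trans lt.
    have := sorted_leq_nth ge_trans_rel (fun x => lexx x) 0 ss.
    move=> /(_ i.-1 (i.-1 + p)%N); rewrite !inE; apply.
    - by rewrite prednK.
    - by rewrite -ltn_subRL.
    - exact: leq_addr.
  by rewrite addn0 (leq_trans (count_size _ _)) // size_take_min geq_minl.
by move=> /(leq_trans ic); rewrite -ltnS prednK // ltnn.
Qed.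

Lemma card_count n (P : pred R) (d : 'I_n -> R) :
  count P [seq d j | j <- index_enum 'I_n] = #|[pred j | P (d j)]|.
Proof. by rewrite count_map cardE /enum_mem size_filter. Qed.

End Lists.

Section CharP.
Variable R : realType.

Lemma charpoly_decomp n (A Q : 'M[R]_n) (d : 'rV[R]_n) :
  Q^T *m Q = 1%:M -> Q *m A = diag_mx d *m Q ->
  char_poly A = \prod_(j < n) ('X - (d 0 j)%:P).
Proof.
move=> QQ QA.
have AE : A = Q^T *m diag_mx d *m Q by rewrite -mulmxA -QA mulmxA QQ mul1mx.
pose Qp := map_mx (@polyC R) Q.
have QpQ : Qp^T *m Qp = 1%:M by rewrite /Qp map_trmx -map_mxM QQ map_mx1.
have E : char_poly_mx A = Qp^T *m char_poly_mx (diag_mx d) *m Qp.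
  rewrite /char_poly_mx mulmxBr mulmxBl.
  have -> : Qp^T *m 'X%:M *m Qp = 'X%:M by rewrite scalar_mxC -mulmxA QpQ mulmx1.
  by rewrite /Qp map_trmx -!map_mxM -AE.
rewrite /char_poly E !det_mulmx mulrC mulrA -det_mulmx.
rewrite [X in X * _](_ : _ = 1); last first.
  by rewrite det_mulmx mulrC -det_mulmx QpQ det1.
rewrite mul1r -/(char_poly _) char_poly_trig ?diag_mx_is_trig //.
by apply: eq_bigr => j _; rewrite mxE eqxx mulr1n.
Qed.

Lemma eiglist_perm n (A Q : 'M[R]_n) (d : 'rV[R]_n) (s : seq R) :
  Q^T *m Q = 1%:M -> Q *m A = diag_mx d *m Q -> eigenvalue_list A s ->
  perm_eq s [seq d 0 j | j <- index_enum 'I_n].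
Proof.
move=> QQ QA [_ cp]; apply: prod_XsubC_eq.
by rewrite -cp big_map (charpoly_decomp QQ QA).
Qed.
End CharP.

Section CF.
Variable R : realType.

Lemma qdiag n (g : 'rV[R]_n) (e : 'rV[R]_n) :
  (g *m diag_mx e *m g^T) 0 0 = \sum_j e 0 j * g 0 j ^+ 2.
Proof.
rewrite mxE; apply: eq_bigr => j _; rewrite mul_mx_diag !mxE; lra.
Qed.

Lemma qid n (g : 'rV[R]_n) : (g *m g^T) 0 0 = \sum_j g 0 j ^+ 2.
Proof. by rewrite mxE; apply: eq_bigr => j _; rewrite !mxE expr2. Qed.

Lemma cf_count k (B P : 'M[R]_k) (e : 'rV[R]_k) (m : nat) (W : 'M[R]_(m,k)) (c : R) :
  P^T *m P = 1%:M -> P *m B = diag_mx e *m P ->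
  (forall y : 'rV_k, (y <= W)%MS -> c * (y *m y^T) 0 0 <= (y *m B *m y^T) 0 0) ->
  (\rank W <= #|[pred j | (c <= e 0 j)%R]|)%N.
Proof.
move=> PP PB HW.
have PP' : P *m P^T = 1%:M by apply: mulmx1C.
set J := [pred j | (c <= e 0 j)%R].
pose Z : 'M[R]_(k, #|J|) := \matrix_(i, r) (i == enum_val r)%:R.
pose F := P^T *m Z.
have gF : forall y : 'rV_k, forall r, (y *m F) 0 r = (y *m P^T) 0 (enum_val r).
  move=> y r; rewrite /F mulmxA [in LHS]mxE (bigD1 (enum_val r)) //= big1.
    by rewrite !mxE eqxx mulr1 addr0.
  by move=> j jn; rewrite !mxE (negbTE jn) mulr0.
have cap0 : (W :&: kermx F)%MS == 0.
  apply/rowV0P => y; rewrite sub_capmx => /andP [yW /sub_kermxP yF].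
  set g := y *m P^T.
  have gJ : forall j, j \in J -> g 0 j = 0.
    move=> j jJ; rewrite -(enum_rankK_in jJ jJ) -gF yF mxE //.
  have yE : y = g *m P by rewrite /g -mulmxA PP mulmx1.
  have := HW y yW; rewrite yE.
  rewrite -[g *m P *m B]mulmxA PB trmx_mul !mulmxA -[g *m diag_mx e *m P *m P^T]mulmxA PP' mulmx1.
  rewrite -[g *m P *m P^T]mulmxA PP' mulmx1 qdiag qid mulr_sumr -subr_ge0 -sumrB.
  move=> Hs.
  have Hterm : forall j, (e 0 j * g 0 j ^+ 2 - c * g 0 j ^+ 2) <= 0.
    move=> j; case: (boolP (j \in J)) => jJ; first by rewrite gJ // expr0n /= !mulr0 subrr.
    have : e 0 j < c by move: jJ; rewrite inE -ltNge.
    have := sqr_ge0 (g 0 j); nra.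
  have Hall : forall j, e 0 j * g 0 j ^+ 2 - c * g 0 j ^+ 2 = 0.
    move=> j; apply/eqP; rewrite eq_le Hterm /=.
    have : \sum_j (e 0 j * g 0 j ^+ 2 - c * g 0 j ^+ 2) = 0.
      by apply/eqP; rewrite eq_le Hs andbT; apply: sumr_le0 => i _; exact: Hterm.
    move/eqP; rewrite -oppr_eq0 -sumrN psumr_eq0 => [/allP/(_ j (mem_index_enum j))|i _].
      by rewrite oppr_eq0 => /eqP ->.
    by rewrite oppr_ge0 Hterm.
  have g0 : g = 0.
    apply/rowP => j; apply/eqP; rewrite [X in _ == X]mxE; case: (boolP (j \in J)) => jJ.
      by rewrite (gJ j jJ).
    have := Hall j; rewrite -mulrBl => /eqP; rewrite mulf_eq0 subr_eq0 sqrf_eq0.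
    case/orP => // /eqP ej; by move: jJ; rewrite inE ej lexx.
  by rewrite g0 mul0mx.
have := mxrank_mul_ker W F; rewrite (eqP cap0) mxrank0 addn0 => <-.
exact: rank_leq_col.
Qed.
End CF.

Section Bil.
Variable R : realType.
Definition bil n (M : 'M[R]_n) (x y : 'rV[R]_n) := (x *m M *m y^T) 0 0.

Lemma bilDl n (M : 'M[R]_n) x y z : bil M (x + y) z = bil M x z + bil M y z.
Proof. by rewrite /bil !mulmxDl mxE. Qed.
Lemma bilDr n (M : 'M[R]_n) x y z : bil M x (y + z) = bil M x y + bil M x z.
Proof. by rewrite /bil linearD /= mulmxDr mxE. Qed.
Lemma bilZl n (M : 'M[R]_n) t x z : bil M (t *: x) z = t * bil M x z.
Proof. by rewrite /bil -!scalemxAl mxE. Qed.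
Lemma bilZr n (M : 'M[R]_n) t x z : bil M x (t *: z) = t * bil M x z.
Proof. by rewrite /bil linearZ /= -scalemxAr mxE. Qed.
Lemma bilC n (M : 'M[R]_n) x y : M^T = M -> bil M x y = bil M y x.
Proof.
move=> sM; rewrite /bil.
have e : (x *m M *m y^T)^T 0 0 = (x *m M *m y^T) 0 0 by rewrite mxE.
by rewrite -e !trmx_mul trmxK sM mulmxA.
Qed.
Lemma bil_entry n (M : 'M[R]_n) x y :
  bil M x y = \sum_j (x *m M) 0 j * y 0 j.
Proof. by rewrite /bil [LHS]mxE; apply: eq_bigr => j _; rewrite [y^T _ _]mxE. Qed.

Lemma qexp n (M : 'M[R]_n) x y t : M^T = M ->
  bil M (x + t *: y) (x + t *: y) = bil M x x + 2 * t * bil M x y + t ^+ 2 * bil M y y.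
Proof.
move=> sM; rewrite !bilDl !bilDr !bilZl !bilZr (bilC y x sM); ring.
Qed.

Lemma bil1 n (x y : 'rV[R]_n) : bil 1%:M x y = \sum_j x 0 j * y 0 j.
Proof. by rewrite bil_entry mulmx1. Qed.
End Bil.

Section Arith.
Variable R : realType.

Lemma dyadic (L x : R) M : 0 < L -> L <= x -> x < 2 ^+ M * L ->
  x <= 2 * \sum_(m < M) (if 2 ^+ m * L <= x then 2 ^+ m * L else 0).
Proof.
move=> L0 Lx; elim: M => [|M IH] hx.
  by move: hx; rewrite expr0 mul1r => h; lra.
rewrite big_ord_recr /=.
have S0 : 0 <= \sum_(m < M) (if 2 ^+ m * L <= x then 2 ^+ m * L else 0).
  apply: sumr_ge0 => m _; case: ifP => // _; apply: mulr_ge0 => //; last lra.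
  exact: exprn_ge0.
case: ifP => hM.
  move: hx; rewrite exprS => hx; lra.
have := IH; rewrite ltNge hM => /(_ isT); lra.
Qed.

Lemma geom M : \sum_(m < M) ((2 : R) ^+ m)^-1 <= 2 - 2 * ((2 : R) ^+ M)^-1.
Proof.
elim: M => [|M IH]; first by rewrite big_ord0 expr0 invr1; lra.
rewrite big_ord_recr /= exprS invfM.
have : 0 < ((2 : R) ^+ M)^-1 by rewrite invr_gt0 exprn_gt0.
lra.
Qed.

Lemma geom2 M : \sum_(m < M) ((2 : R) ^+ m)^-1 <= 2.
Proof.
have := geom M; have : 0 < ((2 : R) ^+ M)^-1 by rewrite invr_gt0 exprn_gt0.
lra.
Qed.

Lemma exists_pow (L mu : R) : 0 < L -> exists M, mu <= 2 ^+ M * L.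
Proof.
move=> L0; case: (lerP mu 0) => hm.
  exists 0%N; rewrite expr0 mul1r; lra.
have h : 0 <= mu / L by apply: divr_ge0; lra.
have := archi_boundP h; set N := Num.Def.archi_bound _ => hN.
exists N; rewrite -ler_pdivrMr // ltW // (lt_le_trans hN) //.
by rewrite -natrX ler_nat ltnW // ltn_expl.
Qed.
End Arith.

Section CS.
Variable R : realType.
Lemma cs (I : finType) (P : pred I) (x y : I -> R) :
  (\sum_(i | P i) x i * y i) ^+ 2 <= (\sum_(i | P i) x i ^+ 2) * (\sum_(i | P i) y i ^+ 2).
Proof.
set X := \sum_(i | P i) x i ^+ 2; set Y := \sum_(i | P i) y i ^+ 2.
set Z := \sum_(i | P i) x i * y i.
have X0 : 0 <= X by apply: sumr_ge0 => i _; exact: sqr_ge0.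
have Y0 : 0 <= Y by apply: sumr_ge0 => i _; exact: sqr_ge0.
case: (eqVneq X 0) => [X_0|XN0].
  have x0 : forall i, P i -> x i = 0.
    move=> i Pi; move/eqP: X_0; rewrite psumr_eq0 => [/allP /(_ i (mem_index_enum i))|j _].
      by rewrite Pi /= sqrf_eq0 => /eqP.
    exact: sqr_ge0.
  have -> : Z = 0 by rewrite /Z big1 // => i Pi; rewrite x0 ?mul0r.
  by rewrite expr0n /= X_0 mul0r.
have Xp : 0 < X by rewrite lt_def XN0 X0.
have E : \sum_(i | P i) (X * y i - Z * x i) ^+ 2 = X * (X * Y - Z ^+ 2).
  transitivity (\sum_(i | P i) (X ^+ 2 * y i ^+ 2 + (Z ^+ 2 * x i ^+ 2 - 2 * X * Z * (x i * y i)))).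
    by apply: eq_bigr => i _; ring.
  rewrite big_split sumrB /= -!mulr_sumr -/X -/Y -/Z; ring.
have : 0 <= X * (X * Y - Z ^+ 2) by rewrite -E; apply: sumr_ge0 => i _; exact: sqr_ge0.
rewrite pmulr_rge0 // subr_ge0; by [].
Qed.
End CS.

Section FA.
Variable R : realType.
Lemma final_arith (L mu be s A Nv yB : R) : 0 < L -> L <= mu -> 0 < be -> be <= 1/10 ->
  mu * be <= L -> 0 <= A -> 0 <= Nv -> (1 - be) * A <= s -> s ^+ 2 <= Nv * A ->
  mu * Nv - 4 * L * A <= yB -> (mu - 51%:R * L) * s <= yB.
Proof.
move=> L0 Lmu be0 be1 mube A0 N0 hs hcs hq.
have s0 : 0 <= s by nra.
have h1 : (1 - be) * s <= Nv.
  case: (eqVneq s 0) => [->|sN0]; first by rewrite mulr0.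
  have sp : 0 < s by rewrite lt_def sN0 s0.
  have : (1 - be) * s ^+ 2 <= Nv * s by nra.
  rewrite expr2 mulrA => h.
  by rewrite -(ler_pM2r sp).
have h2 : 9 * A <= 10 * s by nra.
have h3 : mu * Nv >= mu * s - L * s by nra.
nra.
Qed.
End FA.

Section Core.
Variable R : realType.
Variables (n k : nat) (d : 'rV[R]_n) (T : 'M[R]_(k, n)) (L : R).
Hypothesis L_gt0 : 0 < L.
Hypothesis hd : forall j, d 0 j != 0 -> L <= `|d 0 j|.
Definition alph (t : R) := Num.min (L / t) (1 / 10).
Definition supp (t : R) (a : 'rV[R]_n) := forall j, `|d 0 j| < t -> a 0 j = 0.
Local Notation G := (T^T *m T).
Local Notation I1 := (1%:M : 'M[R]_n).
Hypothesis hemb : forall t, L <= t -> forall a, supp t a ->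
  (1 - alph t) * bil I1 a a <= bil G a a /\ bil G a a <= (1 + alph t) * bil I1 a a.

Lemma G_sym : G^T = G. Proof. by rewrite trmx_mul trmxK. Qed.
Lemma I1_sym : I1^T = I1. Proof. exact: tr_scalar_mx. Qed.

Lemma alph_gt0 t : L <= t -> 0 < alph t.
Proof. move=> Lt; rewrite /alph lt_min; apply/andP; split. have Lg := L_gt0. apply: divr_gt0; lra. lra. Qed.
Lemma alph_le1 t : alph t <= 1 / 10. Proof. by rewrite /alph ge_min lexx orbT. Qed.
Lemma alph_leL t : alph t <= L / t. Proof. by rewrite /alph ge_min lexx. Qed.

Lemma suppD t a b : supp t a -> supp t b -> supp t (a + b).
Proof. by move=> ha hb j hj; rewrite mxE ha ?hb ?addr0. Qed.
Lemma suppZ t c a : supp t a -> supp t (c *: a).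
Proof. by move=> ha j hj; rewrite mxE ha ?mulr0. Qed.

Lemma polar_arith (al s A qu qa : R) : 0 < al ->
  qu + 2 * al * s + al ^+ 2 * qa <= (1 + al) * (s + 2 * al * 0 + al ^+ 2 * A) ->
  (1 - al) * (s + 2 * - al * 0 + (- al) ^+ 2 * A) <= qu + 2 * - al * s + (- al) ^+ 2 * qa ->
  s <= al ^+ 2 * A.
Proof.
move=> al0 h1 h2.
have h : 4 * al * s <= 2 * al * (s + al ^+ 2 * A) by nra.
have : al * s <= al * (al ^+ 2 * A) by nra.
by rewrite ler_pM2l.
Qed.

Lemma polar t u a : L <= t -> supp t u -> supp t a -> bil I1 u a = 0 ->
  bil G u a = bil I1 u u -> bil I1 u u <= (alph t) ^+ 2 * bil I1 a a.
Proof.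
move=> Lt su sa ua Gua.
have Lg := L_gt0.
set al := alph t.
have al0 : 0 < al := alph_gt0 Lt.
have [_ h1] := hemb Lt (suppD su (suppZ al sa)).
have [h2 _] := hemb Lt (suppD su (suppZ (- al) sa)).
move: h1 h2; rewrite !qexp ?G_sym ?I1_sym // ua Gua.
move=> h1 h2; exact: (polar_arith al0 h1 h2).
Qed.

Lemma bil1_ge0 (a : 'rV[R]_n) : 0 <= bil I1 a a.
Proof. rewrite bil1; apply: sumr_ge0 => j _; rewrite -expr2; exact: sqr_ge0. Qed.

Lemma band mu a t : L <= mu -> supp mu a -> L <= t ->
  \sum_(j | (d 0 j < 0) && (`|d 0 j| < mu) && (t <= `|d 0 j|)) ((a *m G) 0 j) ^+ 2
    <= (L / t) ^+ 2 * bil I1 a a.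
Proof.
move=> Lmu sa Lt; have Lg := L_gt0; have A0 := bil1_ge0 a.
case: (lerP t mu) => tm; last first.
  apply: (@le_trans _ _ 0); last by apply: mulr_ge0 => //; exact: sqr_ge0.
  by apply: sumr_le0 => j /andP [/andP [_ h1] h2]; exfalso; lra.
pose cond j := (d 0 j < 0) && (`|d 0 j| < mu) && (t <= `|d 0 j|).
pose u := \row_j (if cond j then (a *m G) 0 j else 0).
have su : supp t u.
  move=> j hj; rewrite mxE /cond; case: ifP => // /andP [_ h]; lra.
have sa' : supp t a by move=> j hj; apply: sa; lra.
have ua : bil I1 u a = 0.
  rewrite bil1 big1 // => j _; rewrite mxE /cond.
  case: ifP => [/andP[/andP[_ hm] _]|_]; last by rewrite mul0r.
  by rewrite (sa j hm) mulr0.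
have Gua : bil G u a = bil I1 u u.
  rewrite (bilC u a G_sym) bil_entry bil1; apply: eq_bigr => j _; rewrite [u 0 j]mxE.
  by case: ifP => _; rewrite ?mulr0.
have := polar Lt su sa' ua Gua.
have -> : bil I1 u u = \sum_(j | cond j) ((a *m G) 0 j) ^+ 2.
  rewrite bil1 [RHS]big_mkcond; apply: eq_bigr => j _; rewrite [u 0 j]mxE.
  by case: ifP => _; rewrite ?mulr0 ?expr2.
have al0 := alph_gt0 Lt; have alL := alph_leL t.
move=> h; apply: (le_trans h); apply: ler_wpM2r => //.
by rewrite lerXn2r // ?nnegrE; [lra | apply: divr_ge0; lra].
Qed.

Lemma layer mu a : L <= mu -> supp mu a ->
  \sum_(j | (d 0 j < 0) && (`|d 0 j| < mu)) `|d 0 j| * ((a *m G) 0 j) ^+ 2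
    <= 4 * L * bil I1 a a.
Proof.
move=> Lmu sa; have Lg := L_gt0; have A0 := bil1_ge0 a.
have [M hM] := exists_pow mu Lg.
pose f (m : nat) (x : R) := if 2 ^+ m * L <= x then 2 ^+ m * L else 0.
set b := fun j => (a *m G) 0 j.
have step1 : \sum_(j | (d 0 j < 0) && (`|d 0 j| < mu)) `|d 0 j| * b j ^+ 2 <=
    \sum_(j | (d 0 j < 0) && (`|d 0 j| < mu)) (2 * \sum_(m < M) f m `|d 0 j|) * b j ^+ 2.
  apply: ler_sum => j /andP [dn dm]; apply: ler_wpM2r; first exact: sqr_ge0.
  apply: dyadic => //; last lra.
  by apply: hd; rewrite lt_eqF.
apply: (le_trans step1).
have step2 : \sum_(j | (d 0 j < 0) && (`|d 0 j| < mu)) (2 * \sum_(m < M) f m `|d 0 j|) * b j ^+ 2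
   = 2 * \sum_(m < M) (2 ^+ m * L) *
       \sum_(j | (d 0 j < 0) && (`|d 0 j| < mu) && (2 ^+ m * L <= `|d 0 j|)) b j ^+ 2.
  transitivity (2 * \sum_(m < M) \sum_(j | (d 0 j < 0) && (`|d 0 j| < mu)) f m `|d 0 j| * b j ^+ 2).
    rewrite exchange_big /= mulr_sumr; apply: congr_big => // j _.
    by rewrite -mulrA mulr_suml.
  congr (_ * _); apply: eq_bigr => m _.
  rewrite [in RHS]big_mkcondr mulr_sumr; apply: eq_bigr => j _ /=.
  rewrite /f; case: ifP => _; by rewrite ?mulr0 ?mul0r.
rewrite step2.
have step3 : forall m : 'I_M, (2 ^+ m * L) *
    \sum_(j | (d 0 j < 0) && (`|d 0 j| < mu) && (2 ^+ m * L <= `|d 0 j|)) b j ^+ 2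
    <= L * ((2 : R) ^+ m)^-1 * bil I1 a a.
  move=> m.
  have pm : 0 < (2 : R) ^+ m by rewrite exprn_gt0.
  have p1 : 1 <= (2 : R) ^+ m by apply: exprn_ege1; lra.
  have Lt : L <= 2 ^+ m * L by nra.
  have := band Lmu sa Lt => h.
  apply: le_trans (ler_wpM2l _ h) _; first by nra.
  have -> : 2 ^+ m * L * ((L / (2 ^+ m * L)) ^+ 2 * bil I1 a a) =
      L * ((2 : R) ^+ m)^-1 * bil I1 a a.
    field; apply/andP; split; apply/negP; move/eqP; lra.
  by [].
apply: le_trans (_ : 2 * \sum_(m < M) L * ((2 : R) ^+ m)^-1 * bil I1 a a <= _).
  apply: ler_wpM2l => //; apply: ler_sum => m _; exact: step3.
rewrite -mulr_suml -mulr_sumr.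
have := geom2 R M; set S := \sum_(m < M) _ => hS.
have LA : 0 <= L * bil I1 a a by apply: mulr_ge0 => //; lra.
have : 0 <= (2 - S) * (L * bil I1 a a) by apply: mulr_ge0 => //; lra.
lra.
Qed.

Lemma bil1_eq0 (a : 'rV[R]_n) : bil I1 a a = 0 -> a = 0.
Proof.
rewrite bil1 => /eqP; rewrite psumr_eq0 => [/allP H|j _]; last by rewrite -expr2 sqr_ge0.
apply/rowP => j; rewrite mxE; have := H j (mem_index_enum j).
by rewrite -expr2 sqrf_eq0 => /eqP.
Qed.

Lemma core mu : L <= mu ->
  exists W : 'M[R]_(n, k), (#|[pred j | (mu <= d 0 j)%R]| <= \rank W)%N /\
    forall y : 'rV_k, (y <= W)%MS ->
      (mu - 51%:R * L) * (y *m y^T) 0 0 <= (y *m (T *m diag_mx d *m T^T) *m y^T) 0 0.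
Proof.
move=> Lmu; have Lg := L_gt0.
have mu0 : 0 < mu by lra.
set V := [pred j | (mu <= d 0 j)%R].
pose C : 'M[R]_(n, #|[predC V]|) := \matrix_(i, r)
  (if mu <= `|d 0 (enum_val r)| then G i (enum_val r) else (i == enum_val r)%:R).
have aC : forall a : 'rV_n, forall r, (a *m C) 0 r =
    if mu <= `|d 0 (enum_val r)| then (a *m G) 0 (enum_val r) else a 0 (enum_val r).
  move=> a r; rewrite [LHS]mxE; case: ifP => h.
    by rewrite [RHS]mxE; apply: eq_bigr => i _; rewrite mxE h.
  rewrite (bigD1 (enum_val r)) //= big1; first by rewrite mxE h eqxx mulr1 addr0.
  by move=> i ir; rewrite mxE h (negbTE ir) mulr0.
have kerC : forall a : 'rV_n, a *m C = 0 -> supp mu a /\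
    (forall j, mu <= `|d 0 j| -> ~~ (mu <= d 0 j) -> (a *m G) 0 j = 0).
  move=> a aC0; split.
    move=> j hj.
    have jNV : j \in [predC V].
      rewrite inE /V inE -ltNge; exact: le_lt_trans (ler_norm _) hj.
    have := aC a (enum_rank_in jNV j); rewrite enum_rankK_in // aC0 mxE.
    by case: ifP => h; [rewrite leNgt hj in h | move=> ->].
  move=> j hj hv.
  have jNV : j \in [predC V] by rewrite inE /V inE.
  have := aC a (enum_rank_in jNV j); rewrite enum_rankK_in // aC0 mxE hj.
  by move=> ->.
pose K := kermx C.
exists (K *m T^T); split.
  have cap0 : (K :&: kermx T^T)%MS == 0.
    apply/rowV0P => y; rewrite sub_capmx => /andP [/sub_kermxP yC /sub_kermxP yT].
    have [sy _] := kerC y yC.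
    have [h1 _] := hemb Lmu sy.
    have : bil G y y = 0 by rewrite /bil mulmxA yT !mul0mx mxE.
    move=> h0; rewrite h0 in h1.
    have := alph_le1 mu; have := bil1_ge0 y => hy ha.
    apply: bil1_eq0; nra.
  have := mxrank_mul_ker K T^T; rewrite (eqP cap0) mxrank0 addn0 => ->.
  rewrite mxrank_ker.
  have hc := cardC V; rewrite card_ord in hc.
  apply: (leq_trans _ (leq_sub2l n (rank_leq_col C))).
  rewrite leq_subRL; first by rewrite addnC cardC card_ord.
  by rewrite -[X in (_ <= X)%N]card_ord -(cardC V) leq_addl.
move=> y /submxP [z ->].
rewrite mulmxA; set a := z *m K.
have aC0 : a *m C = 0 by rewrite /a -mulmxA mulmx_ker mulmx0.
have [sa hb] := kerC a aC0.
have yy : (a *m T^T *m (a *m T^T)^T) 0 0 = bil G a a.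
  by rewrite /bil trmx_mul trmxK !mulmxA.
have yBy : (a *m T^T *m (T *m diag_mx d *m T^T) *m (a *m T^T)^T) 0 0 =
    \sum_j d 0 j * (a *m G) 0 j ^+ 2.
  rewrite -qdiag; congr (_ 0 0).
  by rewrite !trmx_mul trmxK !mulmxA.
rewrite yy yBy.
set b := fun j => (a *m G) 0 j.
have hs := hemb Lmu sa.
have A0 := bil1_ge0 a.
apply: (@final_arith R L mu (alph mu) _ (bil I1 a a) (\sum_(j | V j) b j ^+ 2)) => //.
- exact: alph_gt0.
- exact: alph_le1.
- have := alph_leL mu; rewrite ler_pdivlMr // => h; by rewrite mulrC.
- by apply: sumr_ge0 => j _; exact: sqr_ge0.
- by case: hs.
- have -> : bil G a a = \sum_(j | V j) b j * a 0 j.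
    rewrite bil_entry (bigID V) /= [X in _ + X]big1 ?addr0 // => j jV.
    case: (lerP mu `|d 0 j|) => h; first by rewrite /b (hb j h jV) mul0r.
    by rewrite (sa j h) mulr0.
  apply: le_trans (cs _ _ _) _; apply: ler_wpM2l; first by apply: sumr_ge0 => j _; exact: sqr_ge0.
  rewrite bil1 [X in _ <= X](bigID V) /= -[X in X <= _]addr0; apply: lerD.
    by apply: ler_sum => j _; rewrite expr2.
  apply: sumr_ge0 => j _; rewrite -expr2; exact: sqr_ge0.
- have hl := layer Lmu sa.
  rewrite [X in _ <= X](bigID V) /=.
  have h1 : mu * \sum_(j | V j) b j ^+ 2 <= \sum_(j | V j) d 0 j * b j ^+ 2.
    rewrite mulr_sumr; apply: ler_sum => j jV; apply: ler_wpM2r; first exact: sqr_ge0.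
    by move: jV; rewrite inE.
  have h2 : - \sum_(j | (d 0 j < 0) && (`|d 0 j| < mu)) `|d 0 j| * b j ^+ 2 <=
      \sum_(j | ~~ V j) d 0 j * b j ^+ 2.
    rewrite -sumrN big_mkcond [X in _ <= X]big_mkcond /=; apply: ler_sum => j _.
    have b2 := sqr_ge0 (b j).
    case: ifP => [/andP [dn dm]|hN].
      rewrite ifT; last by rewrite -ltNge; lra.
      rewrite (ler0_norm (ltW dn)); lra.
    case: ifP => // hV; case: (lerP mu `|d 0 j|) => h.
      by rewrite /b (hb j h hV) expr0n /= mulr0.
    have dge : 0 <= d 0 j.
      rewrite leNgt; apply/negP => dlt; move: hN; rewrite dlt h.
      by [].
    by apply: mulr_ge0.
  rewrite /b in hl h1 h2 *; lra.
Qed.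
End Core.

Section Glue.
Variable R : realType.

Lemma row_diag_mul' n (d : 'rV[R]_n) (Q : 'M[R]_n) j :
  row j (diag_mx d *m Q) = d 0 j *: row j Q.
Proof. by rewrite row_mul row_diag_mx -scalemxAl -rowE. Qed.

Lemma sqnormE m (x : 'cV[R]_m) : sqnorm x = (x^T *m x) 0 0.
Proof. by rewrite /sqnorm mxE; apply: eq_bigr => i _; rewrite !mxE expr2. Qed.

Lemma eig_row n (A Q : 'M[R]_n) (d : 'rV[R]_n) j :
  Q *m Q^T = 1%:M -> Q *m A = diag_mx d *m Q -> eigenvalue A (d 0 j).
Proof.
move=> QQ QA; apply/eigenvalueP; exists (row j Q).
  by rewrite -row_mul QA row_diag_mul'.
apply/eqP => h.
have e : (Q *m Q^T) j j = 1 by rewrite QQ mxE eqxx.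
move: e; rewrite mxE big1 => [|k _]; first by move/eqP; rewrite eq_sym oner_eq0.
have := congr1 (fun M : 'rV[R]_n => M 0 k) h; rewrite !mxE => ->; by rewrite mul0r.
Qed.

End Glue.

Unset Implicit Arguments.
Theorem mainTheorem14 (R : realType) (n k : nat) (A : 'M[R]_n) (S : 'M[R]_(k, n))
    (L : R) (sA : seq R) (sB : seq R) :
  A^T = A ->
  0 < L ->
  (forall a : R, eigenvalue A a -> a != 0 -> L <= `|a|) ->
  assumption_L S A L ->
  eigenvalue_list A sA ->
  eigenvalue_list (S *m A *m S^T) sB ->
  forall i : nat, (0 < i)%N -> (i <= size sA)%N -> 0 < sA`_i.-1 ->
    (i <= size sB)%N /\ sA`_i.-1 - 51%:R * L <= sB`_i.-1.
Proof.
move=> symA L0 hev hL elA elB i i0 isz pos.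
have [Q [d [QQ [QtQ QA]]]] := rst symA.
have permA := eiglist_perm QtQ QA elA.
set mu := sA`_i.-1.
have hd : forall j, d 0 j != 0 -> L <= `|d 0 j|.
  move=> j; apply: hev; exact: eig_row QQ QA.
have Lmu : L <= mu.
  have : mu \in sA by apply: mem_nth; rewrite prednK.
  rewrite (perm_mem permA) => /mapP [j _ mj].
  have := hd j; rewrite -mj gtr0_norm //; apply; rewrite gt_eqF //.
set T := S *m Q^T.
have AQ : A *m Q^T = Q^T *m diag_mx d.
  by rewrite -{1}symA -trmx_mul QA trmx_mul tr_diag_mx.
have hemb : forall t, L <= t -> forall a, supp d t a ->
    (1 - alph L t) * bil 1%:M a a <= bil (T^T *m T) a a /\
    bil (T^T *m T) a a <= (1 + alph L t) * bil 1%:M a a.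
  move=> t Lt a sa.
  have t0 : 0 < t by lra.
  pose x := Q^T *m a^T.
  have xin : in_eigspan_ge A t x.
    exists [seq (if t <= `|d 0 j| then d 0 j else t, a 0 j *: col j Q^T) | j <- index_enum 'I_n].
    split.
      move=> p /mapP [j _ ->] /=; case: ifP => h; split => //.
      - rewrite -tr_row -scalemxAr -[A]symA -trmx_mul -row_mul QA row_diag_mul'.
        by rewrite linearZ /= !scalerA mulrC.
      - by rewrite sa ?scale0r ?mulmx0 ?scaler0 // ltNge h.
      - by rewrite gtr0_norm.
    rewrite big_map; apply/matrixP => r c; rewrite ord1 summxE !mxE.
    by apply: eq_bigr => j _; rewrite !mxE mulrC.
  have := hL t Lt x xin; rewrite !sqnormE.
  have -> : (x^T *m x) 0 0 = bil 1%:M a a.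
    by rewrite /x /bil mulmx1 trmx_mul !trmxK mulmxA -[a *m Q *m Q^T]mulmxA QQ mulmx1.
  have -> : ((S *m x)^T *m (S *m x)) 0 0 = bil (T^T *m T) a a.
    by rewrite /x /bil /T !trmx_mul !trmxK !mulmxA.
  by [].
have [W [rkW hW]] := core L0 hd hemb Lmu.
have symB : (S *m A *m S^T)^T = S *m A *m S^T by rewrite !trmx_mul trmxK symA mulmxA.
have BE : S *m A *m S^T = T *m diag_mx d *m T^T.
  have AE : A = Q^T *m diag_mx d *m Q by rewrite -mulmxA -QA mulmxA QtQ mul1mx.
  by rewrite /T {1}AE trmx_mul trmxK !mulmxA.
have [P [e [PP [PtP PB]]]] := rst symB.
have permB := eiglist_perm PtP PB elB.
set c := mu - 51%:R * L.
have cf := cf_count PtP PB (W := W) (c := c).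
have : (i <= count (fun x => (c <= x)%R) sB)%N.
  rewrite (permP permB) card_count.
  apply: leq_trans (cf _); last by move=> y yW; rewrite BE; exact: hW.
  apply: leq_trans rkW.
  have := count_prefix elA.1 i0 isz; rewrite (permP permA) card_count -/mu.
  by [].
exact: nth_from_count elB.1 i0.
Qed.
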